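(* Let $1\le k\le n-1$ and identify $H^*(G_{2k}(\mathbb R^{2n}))$ with the $(+1)$-eigenspace of $\rho^*$ on $H^*(\tilde G_{2k}(\mathbb R^{2n}))$ via $\pi^*$. Write $A=\mathrm{Span}\{p_1^{r_1}\cdots p_k^{r_k}:\sum_{i=1}^kr_i\le n-k-1\}$, $B=\mathrm{Span}\{\bar p_1^{r_1}\cdots\bar p_{n-k}^{r_{n-k}}:\sum_{i=1}^{n-k}r_i\le k-1\}$. Then: (1) multiplication by $e$ is a linear isomorphism $A\to e\cdot A$, and multiplication by $\bar e$ is a linear isomorphism $B\to\bar e\cdot B$; (2) $e\cdot A\oplus\bar e\cdot B$ (a direct sum) is the $(-1)$-eigenspace of $\rho^*$; (3) $e\cdot H^*(G_{2k}(\mathbb R^{2n}))\cap\bar e\cdot H^*(G_{2k}(\mathbb R^{2n}))=0$ and $e\cdot H^*(G_{2k}(\mathbb R^{2n}))\oplus\bar e\cdot H^*(G_{2k}(\mathbb R^{2n}))$ is the $(-1)$-eigenspace of $\rho^*$; (4) the kernel of multiplication by $e$ on $H^*(G_{2k}(\mathbb R^{2n}))$ is $\bar p_{n-k}\cdot B$, and the kernel of multiplication by $\bar e$ is $p_k\cdot A$; (5) $e\cdot A=e\cdot\mathrm{Span}\{\bar p_1^{r_1}\cdots\bar p_{n-k-1}^{r_{n-k-1}}:\sum r_i\le k\}=e\cdot H^*(G_{2k}(\mathbb R^{2n}))$ and $\bar e\cdot B=\bar e\cdot\mathrm{Span}\{p_1^{r_1}\cdots p_{k-1}^{r_{k-1}}:\sum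 r_i\le n-k\}=\bar e\cdot H^*(G_{2k}(\mathbb R^{2n}))$.
   Context: All cohomology has $\mathbb Q$ coefficients. $\tilde G_{2k}(\mathbb R^{2n})$ is the Grassmannian of oriented $2k$-planes in $\mathbb R^{2n}$, $G_{2k}(\mathbb R^{2n})$ the Grassmannian of $2k$-planes, $\pi$ the double cover forgetting orientation, and $\rho$ the orientation-reversing deck involution; $\pi^*$ is injective with image the $(+1)$-eigenspace of $\rho^*$. $p_i$ ($1\le i\le k$) and $\bar p_i$ ($1\le i\le n-k$) are the Pontryagin classes of the tautological bundle $\gamma$ and the complementary bundle $\bar\gamma$ (fibre $V^\perp$), pulled back to $\tilde G_{2k}(\mathbb R^{2n})$ where relevant; $e$ and $\bar e$ are the Euler classes of the oriented tautological and complementary bundles on $\tilde G_{2k}(\mathbb R^{2n})$ (with $V\oplus V^\perp$ oriented as $\mathbb R^{2n}$). Known relations: $(1+p_1+\dots+p_k)(1+\bar p_1+\dots+\bar p_{n-k})=1$, $e^2=p_k$, $\bar e^2=\bar p_{n-k}$, $e\bar e=0$; the monomials $p_1^{r_1}\cdots p_k^{r_k}$ with $\sum r_i\le n-k$ form a basis of $H^*(G_{2k}(\mathbb R^{2n}))$, as do $\bar p_1^{r_1}\cdots\bar p_{n-k}^{r_{n-k}}$ with $\sum r_i\le k$; total Betti numbers are $\binom nk$ for $G_{2k}(\mathbb R^{2n})$ and $2\binom nk$ for $\tilde G_{2k}(\mathbb R^{2n})$. *)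

(* Defs.v *)
(* Abstract (axiomatic) model of H^*(~G_{2k}(R^{2n}); Q). *)
From HB Require Import structures.
From mathcomp Require Import all_boot all_order all_algebra all_field.
Set Implicit Arguments. Unset Strict Implicit. Unset Printing Implicit Defensive.
Import Order.TTheory GRing.Theory Num.Theory.
Local Open Scope ring_scope.

(* monomial p_1^{r_1} ... p_m^{r_m}, the classes being indexed from 1: p 1, ..., p m *)
Definition pmono (L : falgType rat) (m d : nat) (p : nat -> L)
  (r : {ffun 'I_m -> 'I_d.+1}) : L :=
  \prod_(i < m) p i.+1 ^+ (r i : nat).

Definition monos (L : falgType rat) (m d : nat) (p : nat -> L) : seq L :=
  [seq pmono p r | r in [pred r : {ffun 'I_m -> 'I_d.+1} | (\sum_(i < m) (r i : nat) <= d)%N]].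

Definition monoSpan (L : falgType rat) (m d : nat) (p : nat -> L) : {vspace L} :=
  (<<monos m d p>>)%VS.

Definition mulSp (L : falgType rat) (x : L) (U : {vspace L}) : {vspace L} :=
  (amull x @: U)%VS.

Definition eigP (L : falgType rat) (rho : 'End(L)) : {vspace L} := lker (rho - \1)%VF.
Definition eigN (L : falgType rat) (rho : 'End(L)) : {vspace L} := lker (rho + \1)%VF.

(* Main.v *)
Require Import Defs.
From HB Require Import structures.
From mathcomp Require Import all_boot all_order all_algebra all_field zify.
Set Implicit Arguments. Unset Strict Implicit. Unset Printing Implicit Defensive.
Import GRing.Theory Num.Theory.

Lemma hockey m d : (\sum_(0 <= j < d.+1) 'C(m + (d - j), m))%N = 'C(m.+1 + d, m.+1).
Proof.
elim: d => [|d IH]; first by rewrite big_nat1 addn0 binn addn0 binn.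
rewrite big_nat_recl // subn0.
rewrite (eq_bigr (fun j => 'C(m + (d - j), m))) => [|j _]; last by rewrite subSS.
by rewrite IH !addSnnS [in RHS]addnS binS addnC.
Qed.

Definition cnt m c d := #|[pred r : {ffun 'I_m -> 'I_c.+1} | (\sum_(i < m) (r i : nat) <= d)%N]|.

Lemma cntE m c d : (d <= c)%N -> cnt m c d = 'C(m + d, m).
Proof.
elim: m d => [|m IH] d hd.
  rewrite /cnt add0n bin0 (eq_card (B := predT)) ?card_ffun ?card_ord ?expn0 //.
  by move=> r; rewrite !inE big_ord0.
rewrite /cnt -sum1_card.
pose h (x : 'I_c.+1 * {ffun 'I_m -> 'I_c.+1}) : {ffun 'I_m.+1 -> 'I_c.+1} :=
  [ffun i => if unlift ord0 i is Some i' then x.2 i' else x.1].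
pose h' (r : {ffun 'I_m.+1 -> 'I_c.+1}) := (r ord0, [ffun i : 'I_m => r (lift ord0 i)]).
rewrite (reindex h); last first.
  exists h' => [[j r] _|r _].
    rewrite /h /h' /= ffunE unlift_none; congr (_, _); apply/ffunP => i.
    by rewrite !ffunE liftK.
  apply/ffunP => i; rewrite /h /h' ffunE /=.
  by case: unliftP => [j ->|->] //; rewrite ffunE.
have hs x : (\sum_(i < m.+1) (h x i : nat) = x.1 + \sum_(i < m) (x.2 i : nat))%N.
  rewrite big_ord_recl /h ffunE unlift_none; congr (_ + _)%N.
  by apply: eq_bigr => i _; rewrite ffunE liftK.
rewrite (eq_bigl (fun x : 'I_c.+1 * {ffun 'I_m -> 'I_c.+1} => (x.1 + \sum_(i < m) (x.2 i : nat) <= d)%N)); last first.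
  by move=> x; rewrite !inE hs.
rewrite -(pair_big_dep xpredT (fun (j : 'I_c.+1) (r : {ffun 'I_m -> 'I_c.+1}) => (j + \sum_(i < m) (r i : nat) <= d)%N) (fun _ _ => 1%N)) /=.
rewrite (eq_bigr (fun j : 'I_c.+1 => if (j <= d)%N then 'C(m + (d - j), m) else 0%N)); last first.
  move=> j _; case: ifP => hj.
    rewrite -IH; last by apply: leq_trans (leq_subr _ _) hd.
    rewrite /cnt -sum1_card; apply: eq_bigl => r; rewrite !inE.
    by rewrite leq_subRL.
  rewrite big_pred0 // => r; apply/negbTE; rewrite -ltnNge.
  by apply: leq_trans (leq_addr _ _); rewrite ltnNge hj.
rewrite -(big_mkord xpredT (fun j => if (j <= d)%N then 'C(m + (d - j), m) else 0%N)).
rewrite (big_cat_nat _ (n := d.+1)) //= [X in (_ + X)%N]big1_seq ?addn0; last first.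
  move=> j /andP[_]; rewrite mem_index_iota => /andP[hj _].
  by rewrite leqNgt hj.
rewrite -hockey; apply: eq_big_nat => j /andP[_ hj].
by rewrite -ltnS hj.
Qed.


Lemma le_part m c (r : {ffun 'I_m -> 'I_c.+1}) i : (r i <= \sum_(j < m) (r j : nat))%N.
Proof. by rewrite (bigD1 i) //= leq_addr. Qed.

Lemma uniq_image_inj (T : finType) (U : eqType) (f : T -> U) (A : {pred T}) :
  uniq (image f A) -> {in A &, injective f}.
Proof.
move=> u x y xA yA fxy; apply/eqP; apply/negPn/negP => nxy.
have xs : x \in enum A by rewrite mem_enum.
have ys : y \in rem x (enum A) by rewrite mem_rem_uniq ?enum_uniq // inE eq_sym nxy mem_enum.
have := u; rewrite /image_mem (perm_uniq (perm_map f (perm_to_rem xs))) /= => /andP[/negP []].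
by rewrite fxy map_f.
Qed.

Local Open Scope ring_scope.

Lemma free_sub (K : fieldType) (vT : vectType K) (X Y : seq vT) :
  uniq Y -> {subset Y <= X} -> free X -> free Y.
Proof.
move=> uY sYX fX; have uX := free_uniq fX.
rewrite (perm_free (uniq_perm uY (filter_uniq (fun x => x \in Y) uX) _)); first exact: filter_free.
by move=> x; rewrite mem_filter; case hx: (x \in Y) => //=; rewrite sYX.
Qed.

Lemma cap0 (K : fieldType) (vT : vectType K) (X Y Z : seq vT) :
  uniq (Y ++ Z) -> {subset Y ++ Z <= X} -> free X -> (<<Y>> :&: <<Z>> = 0)%VS.
Proof.
move=> u s f; have := free_sub u s f; rewrite cat_free => /and3P[_ _ /directv_addP]; done.
Qed.

Definition Ps m c d : pred {ffun 'I_m -> 'I_c.+1} := [pred r : {ffun 'I_m -> 'I_c.+1} | (\sum_(i < m) (r i : nat) <= d)%N].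
Arguments Ps : clear implicits.
Definition Xs (L : falgType rat) m c d (p : nat -> L) : seq L := [seq pmono p r | r in Ps m c d].

Lemma monosE (L : falgType rat) m d (p : nat -> L) : monos m d p = Xs m d d p.
Proof. by []. Qed.

Lemma size_Xs (L : falgType rat) m c d (p : nat -> L) : (d <= c)%N -> size (Xs m c d p) = 'C(m + d, m).
Proof. by move=> h; rewrite /Xs size_image -(cntE m h). Qed.

Lemma Xs_transfer (L : falgType rat) (p : nat -> L) m c m2 c2 d2 (w : L)
 (g : {ffun 'I_m2 -> 'I_c2.+1} -> {ffun 'I_m -> 'I_c.+1}) :
 free (Xs m c c p) -> {in Ps m2 c2 d2 &, injective g} -> {in Ps m2 c2 d2, forall s, g s \in Ps m c c} ->
 {in Ps m2 c2 d2, forall s, pmono p (g s) = w * pmono p s} ->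
 [/\ uniq [seq w * x | x <- Xs m2 c2 d2 p], {subset [seq w * x | x <- Xs m2 c2 d2 p] <= Xs m c c p}
   & free [seq w * x | x <- Xs m2 c2 d2 p]].
Proof.
move=> fX ginj gP gM.
have eqmap : [seq w * x | x <- Xs m2 c2 d2 p] = [seq pmono p (g s) | s <- enum (Ps m2 c2 d2)].
  rewrite /Xs /image_mem -map_comp; apply/eq_in_map => s; rewrite mem_enum => hs /=.
  by rewrite gM.
have pinj := uniq_image_inj (free_uniq fX).
have u : uniq [seq w * x | x <- Xs m2 c2 d2 p].
  rewrite eqmap map_inj_in_uniq ?enum_uniq // => s t; rewrite !mem_enum => hs ht /pinj h.
  by apply: ginj => //; apply: h; apply: gP.
have s : {subset [seq w * x | x <- Xs m2 c2 d2 p] <= Xs m c c p}.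
  move=> x; rewrite eqmap => /mapP[r]; rewrite mem_enum => hr ->.
  by apply: image_f; apply: gP.
by split => //; apply: free_sub u s fX.
Qed.



Lemma PsE m c d r : (r \in Ps m c d) = (\sum_(i < m) (r i : nat) <= d)%N.
Proof. by rewrite /Ps inE. Qed.

Definition bmp m c2 c (k : nat) (s : {ffun 'I_m.+1 -> 'I_c2.+1}) : {ffun 'I_m.+1 -> 'I_c.+1} :=
  [ffun i => inord (s i + k * (i == ord_max))%N].

Lemma bump_val m c2 c d k s : (d + k <= c)%N -> s \in Ps m.+1 c2 d ->
  forall i, (@bmp m c2 c k s i : nat) = (s i + k * (i == ord_max))%N.
Proof.
move=> hc hs i; rewrite ffunE inordK // ltnS; apply: leq_trans hc.
rewrite PsE in hs; apply: leq_add; first exact: leq_trans (le_part s i) hs.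
by case: (i == ord_max); rewrite ?muln1 ?muln0.
Qed.

Lemma bump_sum m c2 c d k s : (d + k <= c)%N -> s \in Ps m.+1 c2 d ->
  (\sum_(i < m.+1) (@bmp m c2 c k s i : nat) = \sum_(i < m.+1) (s i : nat) + k)%N.
Proof.
move=> hc hs; rewrite (eq_bigr _ (fun i _ => bump_val hc hs i)) big_split /=; congr (_ + _)%N.
rewrite (bigD1 ord_max) //= eqxx muln1 big1 ?addn0 // => i /negPf ->.
by rewrite muln0.
Qed.

Lemma bump_P m c2 c d k s : (d + k <= c)%N -> s \in Ps m.+1 c2 d -> bmp c k s \in Ps m.+1 c c.
Proof.
move=> hc hs; rewrite PsE (bump_sum hc hs); apply: leq_trans hc.
by rewrite leq_add2r -PsE.
Qed.

Lemma bump_inj m c2 c d k : (d + k <= c)%N -> {in Ps m.+1 c2 d &, injective (@bmp m c2 c k)}.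
Proof.
move=> hc s t hs ht h; apply/ffunP => i; apply/val_inj.
have := congr1 (fun f : {ffun 'I_m.+1 -> 'I_c.+1} => (f i : nat)) h => /=.
by rewrite (bump_val hc hs) (bump_val hc ht) => /addIn.
Qed.

Lemma bump_max m c2 c d k s : (d + k <= c)%N -> s \in Ps m.+1 c2 d -> (k <= @bmp m c2 c k s ord_max)%N.
Proof. by move=> hc hs; rewrite (bump_val hc hs) eqxx muln1 leq_addl. Qed.

Lemma bump_pmono (L : falgType rat) (hcomm : forall x y : L, x * y = y * x) (p : nat -> L)
  m c2 c d k s : (d + k <= c)%N -> s \in Ps m.+1 c2 d ->
  pmono p (@bmp m c2 c k s) = p m.+1 ^+ k * pmono p s.
Proof.
move=> hc hs; rewrite /pmono !big_ord_recr /= (bump_val hc hs) eqxx muln1 exprD.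
rewrite (eq_bigr (fun i : 'I_m => p i.+1 ^+ (s (widen_ord (leqnSn m) i) : nat))); last first.
  move=> i _; rewrite (bump_val hc hs); congr (_ ^+ _).
  have -> : (widen_ord (leqnSn m) i == ord_max) = false.
    by apply/negbTE; rewrite -val_eqE /= neq_ltn ltn_ord.
  by rewrite muln0 addn0.
by rewrite mulrA [_ * p m.+1 ^+ k]hcomm !mulrA.
Qed.

Definition extf m c2 c (s : {ffun 'I_m -> 'I_c2.+1}) : {ffun 'I_m.+1 -> 'I_c.+1} :=
  [ffun i => oapp (fun j : 'I_m => inord (s j)) ord0 (insub (val i))].

Lemma ext_val m c2 c d s : (d <= c)%N -> s \in Ps m c2 d ->
  forall i : 'I_m, (@extf m c2 c s (widen_ord (leqnSn m) i) : nat) = s i.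
Proof.
move=> hc hs i; rewrite ffunE; case: insubP => [j _ hj|] /=; last by rewrite ltn_ord.
have -> : j = i by apply: val_inj.
by rewrite inordK // ltnS; apply: leq_trans hc; rewrite PsE in hs; apply: leq_trans (le_part s i) hs.
Qed.

Lemma ext_max m c2 c s : (@extf m c2 c s ord_max : nat) = 0%N.
Proof. by rewrite ffunE; case: insubP => [j /= |] //; rewrite ltnn. Qed.

Lemma ext_sum m c2 c d s : (d <= c)%N -> s \in Ps m c2 d ->
  (\sum_(i < m.+1) (@extf m c2 c s i : nat) = \sum_(i < m) (s i : nat))%N.
Proof.
move=> hc hs; rewrite big_ord_recr /= ext_max addn0.
by apply: eq_bigr => i _; rewrite (ext_val hc hs).
Qed.

Lemma ext_P m c2 c d s : (d <= c)%N -> s \in Ps m c2 d -> extf c s \in Ps m.+1 c c.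
Proof. by move=> hc hs; rewrite PsE (ext_sum hc hs) (leq_trans _ hc) // -PsE. Qed.

Lemma ext_inj m c2 c d : (d <= c)%N -> {in Ps m c2 d &, injective (@extf m c2 c)}.
Proof.
move=> hc s t hs ht h; apply/ffunP => i; apply/val_inj.
have := congr1 (fun f : {ffun 'I_m.+1 -> 'I_c.+1} => (f (widen_ord (leqnSn m) i) : nat)) h => /=.
by rewrite (ext_val hc hs) (ext_val hc ht).
Qed.

Lemma ext_pmono (L : falgType rat) (p : nat -> L) m c2 c d s : (d <= c)%N -> s \in Ps m c2 d ->
  pmono p (@extf m c2 c s) = pmono p s.
Proof.
move=> hc hs; rewrite /pmono big_ord_recr /= ext_max expr0 mulr1.
by apply: eq_bigr => i _; rewrite (ext_val hc hs).
Qed.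



Lemma map_Xs (L : falgType rat) (p : nat -> L) m c m2 c2 d2 (w : L)
 (g : {ffun 'I_m2 -> 'I_c2.+1} -> {ffun 'I_m -> 'I_c.+1}) :
 {in Ps m2 c2 d2, forall s, pmono p (g s) = w * pmono p s} ->
 [seq w * x | x <- Xs m2 c2 d2 p] = [seq pmono p (g s) | s <- enum (Ps m2 c2 d2)].
Proof.
move=> gM; rewrite /Xs /image_mem -map_comp; apply/eq_in_map => s; rewrite mem_enum => hs /=.
by rewrite gM.
Qed.

Lemma map1 (L : falgType rat) (p : L) (X : seq L) : [seq (p : L) ^+ 0 * x | x <- X] = X.
Proof. by rewrite (eq_map (g := id)) ?map_id // => x; rewrite expr0 mul1r. Qed.

Lemma map_amull (L : falgType rat) (X : seq L) (q : L) : map (amull q) X = [seq q ^+ 1 * x | x <- X].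
Proof. by apply: eq_map => x; rewrite lfunE /= expr1. Qed.

Lemma side (L : falgType rat) (hcomm : forall x y : L, x * y = y * x) (p : nat -> L) (a b : nat)
  (H : {vspace L}) (hb : basis_of H (monos a.+1 b.+1 p)) :
  let A := monoSpan a.+1 b p in
  let M := monoSpan a b.+1 p in
  let PA := mulSp (p a.+1) A in
  [/\ (A <= H)%VS /\ \dim A = 'C(a.+1 + b, a.+1),
      (A :&: lker (amull (p a.+1)) = 0)%VS,
      (PA <= H)%VS /\ \dim PA = \dim A,
      [/\ (M <= H)%VS, \dim M = 'C(a + b.+1, a) & (M :&: PA = 0)%VS]
    & \dim H = 'C(a.+1 + b.+1, a.+1)].
Proof.
move=> A M PA.
have fX : free (Xs a.+1 b.+1 b.+1 p) by rewrite -monosE; exact: basis_free hb.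
have sX : (<<Xs a.+1 b.+1 b.+1 p>> = H)%VS by rewrite -monosE; exact: span_basis hb.
have hXH : {subset Xs a.+1 b.+1 b.+1 p <= H} by move=> x hx; rewrite -sX memv_span.
have hcA : (b + 0 <= b.+1)%N by rewrite addn0.
have [uA sA fA] := Xs_transfer (d2 := b) (g := @bmp a b b.+1 0) fX (bump_inj hcA) (fun s hs => bump_P hcA hs)
   (fun s hs => bump_pmono hcomm p hcA hs).
rewrite map1 in uA sA fA.
have AH : (A <= H)%VS by apply/span_subvP => x /sA /hXH.
have dA : \dim A = 'C(a.+1 + b, a.+1) by rewrite /A /monoSpan monosE (eqP fA) size_Xs.
have hcB : (b + 1 <= b.+1)%N by rewrite addn1.
have gMB : {in Ps a.+1 b b, forall s, pmono p (@bmp a b b.+1 1 s) = p a.+1 ^+ 1 * pmono p s}.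
  by move=> s hs; rewrite (bump_pmono hcomm p hcB hs).
have [uB sB fB] := Xs_transfer (d2 := b) (g := @bmp a b b.+1 1) fX (bump_inj hcB) (fun s hs => bump_P hcB hs) gMB.
have ePA : PA = span [seq p a.+1 ^+ 1 * x | x <- Xs a.+1 b b p].
  by rewrite /PA /mulSp /A /monoSpan limg_span map_amull.
have PAH : (PA <= H)%VS by rewrite ePA; apply/span_subvP => x /sB /hXH.
have dPA : \dim PA = \dim A.
  by rewrite ePA (eqP fB) size_map -(eqP fA) /A /monoSpan monosE.
have kA : (A :&: lker (amull (p a.+1)) = 0)%VS.
  apply/eqP; rewrite -dimv_eq0; apply/eqP.
  have := limg_ker_dim (amull (p a.+1)) A; rewrite -/(mulSp _ _) -/PA dPA.
  by move/eqP; rewrite -{2}[\dim A]add0n eqn_add2r => /eqP.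
have hcM : (b.+1 <= b.+1)%N by [].
have gMM : {in Ps a b.+1 b.+1, forall s, pmono p (@extf a b.+1 b.+1 s) = p a.+1 ^+ 0 * pmono p s}.
  by move=> s hs; rewrite expr0 mul1r (ext_pmono p hcM hs).
have [uM sM fM] := Xs_transfer (d2 := b.+1) (g := @extf a b.+1 b.+1) fX (ext_inj hcM) (fun s hs => ext_P hcM hs) gMM.
rewrite map1 in uM sM fM.
have MH : (M <= H)%VS by apply/span_subvP => x /sM /hXH.
have dM : \dim M = 'C(a + b.+1, a) by rewrite /M /monoSpan monosE (eqP fM) size_Xs.
have MPA : (M :&: PA = 0)%VS.
  rewrite ePA /M /monoSpan monosE; apply: (cap0 (X := Xs a.+1 b.+1 b.+1 p)) => //; last first.
    by move=> x; rewrite mem_cat => /orP[/sM|/sB].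
  rewrite cat_uniq uM uB andbT /=; apply/hasPn => z hz; apply/negP => hzM.
  move: hz; rewrite (map_Xs gMB) => /mapP[s]; rewrite mem_enum => hs hzs.
  move: hzM; rewrite -(map1 (p a.+1) (Xs a b.+1 b.+1 p)) (map_Xs gMM) => /mapP[t]; rewrite mem_enum => ht hzt.
  have pinj := uniq_image_inj (free_uniq fX).
  have e : bmp b.+1 1 s = extf b.+1 t.
    apply: pinj; [exact: bump_P hcB hs | exact: ext_P hcM ht | by rewrite -hzs -hzt].
  have := bump_max hcB hs; rewrite e ext_max //.
have dH : \dim H = 'C(a.+1 + b.+1, a.+1) by rewrite -sX (eqP fX) size_Xs.
by split.
Qed.



Lemma binC' x y : 'C(x + y, x) = 'C(x + y, y).
Proof. by rewrite -[X in _ = 'C(_, X)](addKn x y) bin_sub // leq_addr. Qed.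

Lemma binom_split a b : ('C(a.+1 + b, a.+1) + 'C(b.+1 + a, b.+1) = 'C(a.+1 + b.+1, a.+1))%N.
Proof.
rewrite addnS binS; congr (_ + _)%N.
by rewrite [in RHS]addSnnS addnC binC'.
Qed.

Lemma eside (L : falgType rat) (hcomm : forall x y : L, x * y = y * x) (rho : 'End(L))
  (hrhoM : forall x y : L, rho (x * y) = rho x * rho y)
  (p q : nat -> L) (e f : L) (a b : nat)
  (hrhoe : rho e = - e) (hrhof : rho f = - f)
  (he2 : e ^+ 2 = p a.+1) (hf2 : f ^+ 2 = q b.+1) (hef : e * f = 0)
  (hbp : basis_of (eigP rho) (monos a.+1 b.+1 p)) (hbq : basis_of (eigP rho) (monos b.+1 a.+1 q))
  (hdim : \dim (fullv : {vspace L}) = (2 * 'C(a.+1 + b.+1, a.+1))%N) :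
  let H := eigP rho in let A := monoSpan a.+1 b p in let B := monoSpan b.+1 a q in
  [/\ {in A &, injective (fun x => e * x)},
      directv (mulSp e A + mulSp f B) /\ (mulSp e A + mulSp f B)%VS = eigN rho,
      (H :&: lker (amull e))%VS = mulSp (q b.+1) B,
      mulSp e A = mulSp e (monoSpan b a.+1 q) /\ mulSp e (monoSpan b a.+1 q) = mulSp e H
    & mulSp e H = mulSp e A].
Proof.
move=> H A B.
have [[AH dA] kA [PAH dPA] [MH dM MPA] dH] := side hcomm hbp.
have [[BH dB] kB [QBH dQB] [MqH dMq MqQB] _] := side hcomm hbq.
rewrite -/H -/A in AH dA kA PAH dPA MH dM MPA dH.
rewrite -/H -/B in BH dB kB QBH dQB MqH dMq MqQB.
set N := eigN rho.
set C := 'C(a.+1 + b.+1, a.+1).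
have memH x : (x \in H) = (rho x == x).
  by rewrite memv_ker add_lfunE opp_lfunE id_lfunE subr_eq0.
have memN x : (x \in N) = (rho x == - x).
  by rewrite memv_ker add_lfunE id_lfunE addr_eq0.
have HN : (H :&: N = 0)%VS.
  apply/eqP; rewrite -subv0; apply/subvP => x /memv_capP[]; rewrite memH memN memv0.
  move=> /eqP -> /eqP h; have : x *+ 2 == 0 by rewrite mulr2n {1}h addNr.
  by rewrite -scaler_nat scaler_eq0 pnatr_eq0.
have dN : (\dim N <= C)%N.
  have := dimv_sum_cap H N; rewrite HN dimv0 addn0 dH -/C.
  have := dimvS (subvf (H + N)%VS); rewrite hdim -/C; lia.
have mulN (g : L) U : rho g = - g -> (U <= H)%VS -> (mulSp g U <= N)%VS.
  move=> hg UH; apply/subvP => y /memv_imgP[u hu ->]; rewrite lfunE /= memN hrhoM hg.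
  by move: (subvP UH u hu); rewrite memH => /eqP ->; rewrite mulNr.
have ee x : e * (e * x) = p a.+1 * x by rewrite mulrA -expr2 he2.
have ff x : f * (f * x) = q b.+1 * x by rewrite mulrA -expr2 hf2.
have injA : (A :&: lker (amull e) = 0)%VS.
  apply/eqP; rewrite -subv0; apply/subvP => x /memv_capP[hx]; rewrite memv_ker lfunE /= => /eqP hex.
  have : x \in (A :&: lker (amull (p a.+1)))%VS by rewrite memv_cap hx memv_ker lfunE /= -ee hex mulr0.
  by rewrite kA.
have injB : (B :&: lker (amull f) = 0)%VS.
  apply/eqP; rewrite -subv0; apply/subvP => x /memv_capP[hx]; rewrite memv_ker lfunE /= => /eqP hex.
  have : x \in (B :&: lker (amull (q b.+1)))%VS by rewrite memv_cap hx memv_ker lfunE /= -ff hex mulr0.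
  by rewrite kB.
have deA : \dim (mulSp e A) = \dim A by apply: limg_dim_eq.
have dfB : \dim (mulSp f B) = \dim B by apply: limg_dim_eq.
have capEF : (mulSp e A :&: mulSp f B = 0)%VS.
  apply/eqP; rewrite -subv0; apply/subvP => x /memv_capP[/memv_imgP[u hu ->]].
  move=> /memv_imgP[v hv]; rewrite !lfunE /= => hx; rewrite memv0.
  have : u \in (A :&: lker (amull (p a.+1)))%VS.
    by rewrite memv_cap hu memv_ker lfunE /= -ee hx mulrA hef mul0r.
  by rewrite kA memv0 => /eqP ->; rewrite mulr0.
have dAB : (\dim A + \dim B = C)%N by rewrite dA dB binom_split.
have sumN : (mulSp e A + mulSp f B)%VS = N.
  apply/eqP; rewrite eqEdim subv_add !mulN //= (dimv_disjoint_sum capEF) deA dfB dAB.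
  exact: dN.
have kerE : (H :&: lker (amull e))%VS = mulSp (q b.+1) B.
  apply/esym/eqP; rewrite eqEdim subv_cap QBH /=.
  have -> : (mulSp (q b.+1) B <= lker (amull e))%VS.
    apply/subvP => y /memv_imgP[v hv ->]; rewrite memv_ker !lfunE /=.
    by rewrite -hf2 expr2 !mulrA hef !mul0r.
  have := limg_ker_dim (amull e) H; have := dimvS (limgS (amull e) AH).
  rewrite -!/(mulSp _ _) deA dQB dH -/C /= => h1 h2.
  by rewrite -(leq_add2r (\dim (mulSp e H))) h2 -dAB addnC leq_add2l.
have eHA : mulSp e H = mulSp e A.
  apply/esym/eqP; rewrite eqEdim limgS //= deA.
  have := limg_ker_dim (amull e) H; rewrite kerE dQB dH -/(mulSp _ _) -/C => h.
  by rewrite -(leq_add2l (\dim B)) h -dAB addnC.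
have eMq : mulSp e (monoSpan b a.+1 q) = mulSp e H.
  apply/eqP; rewrite eqEdim limgS //= [X in (_ <= X)%N]limg_dim_eq.
    by rewrite -/(mulSp _ _) eHA deA dMq dA binC' [(a.+1 + b)%N]addnC.
  apply/eqP; rewrite -subv0; apply/subvP => x /memv_capP[hx hk].
  have : x \in (monoSpan b a.+1 q :&: mulSp (q b.+1) B)%VS.
    by rewrite memv_cap hx -kerE memv_cap hk (subvP MqH).
  by rewrite MqQB.
split => //.
- move=> x y hx hy /eqP; rewrite -subr_eq0 -mulrBr => /eqP h; apply/eqP; rewrite -subr_eq0.
  have : (x - y) \in (A :&: lker (amull e))%VS by rewrite memv_cap rpredB // memv_ker lfunE /= h.
  by rewrite injA memv0.
- by split => //; apply/directv_addP.
- by split => //; rewrite eMq.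
Qed.

Unset Implicit Arguments.


Theorem mainTheorem16
  (n k : nat) (hk1 : (1 <= k)%N) (hkn : (k <= n - 1)%N)
  (L : falgType rat)                     (* H^*(~G_{2k}(R^{2n})) *)
  (hcomm : forall x y : L, x * y = y * x)
  (rho : 'End(L))                        (* rho^* *)
  (hrhoM : forall x y : L, rho (x * y) = rho x * rho y)
  (hrho1 : rho 1 = 1)
  (hrho2 : forall x : L, rho (rho x) = x)
  (p pb : nat -> L)                      (* p_i, bar p_i *)
  (e eb : L)                             (* e, bar e *)
  (hrhoe : rho e = - e) (hrhoeb : rho eb = - eb)
  (hpont : (1 + \sum_(1 <= i < k.+1) p i) * (1 + \sum_(1 <= i < (n - k)%N.+1) pb i) = 1)
  (he2 : e ^+ 2 = p k) (heb2 : eb ^+ 2 = pb (n - k)%N) (hee : e * eb = 0)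
  (hbasis_p : basis_of (eigP rho) (monos k (n - k)%N p))
  (hbasis_pb : basis_of (eigP rho) (monos (n - k)%N k pb))
  (hdim : \dim (fullv : {vspace L}) = (2 * 'C(n, k))%N) :
  let H := eigP rho in
  let A := monoSpan k (n - k - 1)%N p in
  let B := monoSpan (n - k)%N (k - 1)%N pb in
  (* (1) *)
  ({in A &, injective (fun a => e * a)} /\ {in B &, injective (fun b => eb * b)}) /\
  (* (2) *)
  (directv (mulSp e A + mulSp eb B) /\ (mulSp e A + mulSp eb B)%VS = eigN rho) /\
  (* (3) *)
  ((mulSp e H :&: mulSp eb H)%VS = 0%VS /\ (mulSp e H + mulSp eb H)%VS = eigN rho) /\
  (* (4) *)
  ((H :&: lker (amull e))%VS = mulSp (pb (n - k)%N) B /\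
   (H :&: lker (amull eb))%VS = mulSp (p k) A) /\
  (* (5) *)
  (mulSp e A = mulSp e (monoSpan (n - k - 1)%N k pb) /\ mulSp e (monoSpan (n - k - 1)%N k pb) = mulSp e H /\
   mulSp eb B = mulSp eb (monoSpan (k - 1)%N (n - k)%N p) /\ mulSp eb (monoSpan (k - 1)%N (n - k)%N p) = mulSp eb H).
Proof.
case: k hk1 hkn hpont he2 heb2 hbasis_p hbasis_pb hdim => // a _ hkn hpont he2 heb2 hbasis_p hbasis_pb hdim.
have hn : (a.+1 < n)%N by lia.
have [b hb] : exists b, (n - a.+1)%N = b.+1 by exists (n - a.+1).-1; rewrite prednK // subn_gt0.
have hn' : n = (a.+1 + b.+1)%N by lia.
rewrite hb in he2 heb2 hbasis_p hbasis_pb *; rewrite hn' in hdim.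
rewrite !subn1 /=.
have hbe : eb * e = 0 by rewrite hcomm.
have hdim2 : \dim (fullv : {vspace L}) = (2 * 'C(b.+1 + a.+1, b.+1))%N by rewrite hdim binC' addnC binC'.
have [i1 [d1 s1] k1 [m1 m1'] h1] := eside hcomm hrhoM hrhoe hrhoeb he2 heb2 hee hbasis_p hbasis_pb hdim.
have [i2 [d2 s2] k2 [m2 m2'] h2] := eside hcomm hrhoM hrhoeb hrhoe heb2 he2 hbe hbasis_pb hbasis_p hdim2.
rewrite h1 h2.
split; first by split.
split; first by split.
split; first by split => //; apply/directv_addP.
split; first by split.
by rewrite -h1 -h2.
Qed.
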